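(* Let $\theta_1,\theta_2\in(0,\pi/2)$ satisfy $\theta_1\cot\theta_1=\pi\cot\theta_2$. Then $$\frac{2\theta_1}{\sin\theta_1}+2\cos\theta_1-\pi>\frac{2\pi}{\sin\theta_2}-2\pi.$$ *)

(* Defs.v *)
From Stdlib Require Import Reals.
Open Scope R_scope.
Definition cot (x : R) : R := cos x / sin x.

(* Main.v *)
Require Import Defs.
From Stdlib Require Import Reals Lra Lia Psatz.
Open Scope R_scope.

Lemma PI_bounds : 3.14 < PI < 3.15.
Proof.
  pose proof (PI_2_3_7_ineq 1) as [H1 H2].
  unfold sum_f_R0, tg_alt, PI_2_3_7_tg, Ratan_seq in H1, H2.
  simpl in H1, H2. lra.
Qed.

Lemma sin_b (a : R) : 0 <= a -> a <= PI ->
  a - a^3/6 <= sin a <= a - a^3/6 + a^5/120.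
Proof.
  intros. pose proof (sin_bound a 0 H H0) as [L U].
  unfold sin_approx, sum_f_R0, sin_term in L, U. simpl in L, U. lra.
Qed.

Lemma cos_b (a : R) : - PI/2 <= a -> a <= PI/2 ->
  1 - a^2/2 + a^4/24 - a^6/720 <= cos a <= 1 - a^2/2 + a^4/24.
Proof.
  intros. pose proof (cos_bound a 1 H H0) as [L _].
  pose proof (cos_bound a 0 H H0) as [_ U].
  unfold cos_approx, sum_f_R0, cos_term in L, U. simpl in L, U. lra.
Qed.

Lemma Q1 (x p : R) : 0 <= x <= 0.64 -> 3.14 <= p <= 3.15 ->
  2*p*(1 - 0.16 * x) + (2*p*(1 - x/2) - p^2)*(1 - 0.16 * x)^2 - (1 - x/2)^2 > 0.
Proof. intros Hx Hp.
  assert (A: 0 <= (p-3.14)*(3.15-p)) by nra.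
  assert (B: 0 <= x*(0.64-x)) by nra.
  assert (C: 0 <= x*x) by nra.
  assert (D: 0 <= x*(p-3.14)) by nra.
  assert (E: 0 <= x*(3.15-p)) by nra.
  assert (F: 0 <= x*x*(p-3.14)) by nra.
  assert (G: 0 <= x*x*(3.15-p)) by nra.
  assert (G2: 0 <= x*x*x) by nra.
  nra. Qed.

Lemma H2 (e p : R) : 0 <= e <= 0.79 -> 3.14 <= p <= 3.15 ->
  p*(1-e^2/2)*(p/2 - p*e^2/24 - 4*e/3 + e^3/6) > (p/2 - e)^2.
Proof. intros.
  assert (A: 0 <= (p-3.14)*(3.15-p)) by nra.
  assert (B: 0 <= e*(0.79-e)) by nra.
  assert (C: 0 <= e*e) by nra.
  assert (D: 0 <= e*(p-3.14)) by nra.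
  assert (E: 0 <= e*(3.15-p)) by nra.
  assert (F: 0 <= e*e*(p-3.14)) by nra.
  assert (G: 0 <= e*e*(3.15-p)) by nra.
  nra. Qed.
Definition PP (p a s k : R) := 2*p*a*s + (2*p*k - p^2)*s^2 - a^2*k^2.

Lemma reg1 (a : R) : 0 < a <= 0.79 -> PP PI a (sin a) (cos a) > 0.
Proof.
  intros Ha. pose proof PI_bounds as Hp.
  assert (Hs : a - a^3/6 <= sin a <= a - a^3/6 + a^5/120) by (apply sin_b; lra).
  assert (Hc : 1 - a^2/2 + a^4/24 - a^6/720 <= cos a <= 1 - a^2/2 + a^4/24) by (apply cos_b; lra).
  set (p := PI) in *.
  set (s := sin a) in *. set (k := cos a) in *.
  set (su := a*(1 - 0.16*a^2)). set (kl := 1 - a^2/2).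
  assert (a2 : 0 < a^2 <= 0.64) by nra.
  assert (Hsu : s <= su).
  { unfold su. assert (a^5 <= 0.64 * a^3) by (replace (a^5) with (a^2*a^3) by ring; nra). nra. }
  assert (Hsl : a*(1 - a^2/6) <= s) by lra.
  assert (Hkl : kl <= k).
  { unfold kl. assert (a^6 <= 0.64*a^4) by (replace (a^6) with (a^2*a^4) by ring; nra).
    assert (0 < a^4) by nra. nra. }
  assert (Hk1 : k <= 1).
  { assert (a^4 <= 0.64*a^2) by (replace (a^4) with (a^2*a^2) by ring; nra). nra. }
  assert (St1 : PP p a s k >= PP p a su k).
  { assert (E : PP p a s k - PP p a su k = (s - su)*(2*p*a + (2*p*k - p^2)*(s+su))) by (unfold PP; ring).
    assert (2*p*a + (2*p*k - p^2)*(s+su) <= 0).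
    { assert (s + su >= 2*a*(1-a^2/6)) by (unfold su in *; nra).
      assert (p^2 - 2*p*k >= p*(p-2)) by nra.
      assert (p*(p-2) >= 3.57) by nra.
      assert ((p^2 - 2*p*k)*(s+su) >= 3.57*(2*a*(1-a^2/6))).
      { apply Rge_trans with (3.57 * (s+su)). 2: nra.
        apply Rle_ge, Rmult_le_compat_r; nra. }
      nra. }
    nra. }
  assert (St2 : PP p a su k >= PP p a su kl).
  { assert (E : PP p a su k - PP p a su kl = (k - kl)*(2*p*su^2 - a^2*(k+kl))) by (unfold PP; ring).
    assert (su >= 0.89*a) by (unfold su; nra).
    assert (su^2 >= 0.79*a^2) by nra.
    assert (a^2*(k+kl) <= 2*a^2) by nra.
    assert (0 <= 2*p*su^2 - a^2*(k+kl)) by nra.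
    assert (0 <= (k - kl)*(2*p*su^2 - a^2*(k+kl))) by (apply Rmult_le_pos; lra).
    lra. }
  assert (St3 : PP p a su kl = a^2 * (2*p*(1 - 0.16 * a^2) + (2*p*(1 - a^2/2) - p^2)*(1 - 0.16 * a^2)^2 - (1 - a^2/2)^2)).
  { unfold PP, su, kl. ring. }
  assert (HQ := Q1 (a^2) p). specialize (HQ ltac:(lra) ltac:(lra)).
  assert (PP p a su kl > 0) by (rewrite St3; apply Rmult_lt_0_compat; lra).
  lra.
Qed.

Lemma reg2 (e : R) : 0 < e <= 0.79 -> PP PI (PI/2 - e) (sin (PI/2 - e)) (cos (PI/2 - e)) > 0.
Proof.
  intros He. pose proof PI_bounds as Hp.
  rewrite sin_shift, cos_shift.
  assert (Hs : e - e^3/6 <= sin e <= e - e^3/6 + e^5/120) by (apply sin_b; lra).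
  assert (Hc : 1 - e^2/2 + e^4/24 - e^6/720 <= cos e <= 1 - e^2/2 + e^4/24) by (apply cos_b; lra).
  set (p := PI) in *. set (Sn := sin e) in *. set (C := cos e) in *.
  assert (e2 : 0 < e^2 <= 0.6241) by nra.
  assert (HS : Sn <= e).
  { assert (e^5 <= 0.6241 * e^3) by (replace (e^5) with (e^2*e^3) by ring; nra). nra. }
  assert (HS0 : 0 <= e - e^3/6) by nra.
  assert (HC : 1 - e^2/2 <= C).
  { assert (e^6 <= 0.6241*e^4) by (replace (e^6) with (e^2*e^4) by ring; nra).
    assert (0 < e^4) by nra. nra. }
  assert (HC0 : 0 < 1 - e^2/2) by nra.
  assert (E : PP p (p/2 - e) C Sn = p*C*(p*(1-C) - 2*e + 2*Sn*C) - (p/2-e)^2*Sn^2) .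
  { unfold PP. field. }
  assert (HSC : (e - e^3/6)*(1-e^2/2) <= Sn*C).
  { apply Rmult_le_compat; lra. }
  assert (Hg : p*(1-C) - 2*e + 2*Sn*C >= e^2*(p/2 - p*e^2/24 - 4*e/3 + e^3/6)) by nra.
  assert (HH := H2 e p). specialize (HH ltac:(lra) ltac:(lra)).
  assert (Hq : 0 <= (p/2 - e)^2) by nra.
  assert (Hpos : 0 < p/2 - p*e^2/24 - 4*e/3 + e^3/6).
  { assert (0 < p*(1-e^2/2)) by nra. nra. }
  assert (L1 : p*C*(p*(1-C) - 2*e + 2*Sn*C) >= p*(1-e^2/2)*(e^2*(p/2 - p*e^2/24 - 4*e/3 + e^3/6))).
  { apply Rle_ge, Rmult_le_compat.
    - nra.
    - nra.
    - nra.
    - lra. }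
  assert (L2 : (p/2-e)^2*Sn^2 <= (p/2-e)^2*e^2).
  { apply Rmult_le_compat_l. lra. assert (0 <= Sn) by nra. nra. }
  assert (L3 : p*(1-e^2/2)*(e^2*(p/2 - p*e^2/24 - 4*e/3 + e^3/6)) > (p/2-e)^2*e^2).
  { replace (p*(1-e^2/2)*(e^2*(p/2 - p*e^2/24 - 4*e/3 + e^3/6))) with
      (e^2 * (p*(1-e^2/2)*(p/2 - p*e^2/24 - 4*e/3 + e^3/6))) by ring.
    rewrite (Rmult_comm ((p/2-e)^2)). apply Rmult_lt_compat_l; lra. }
  lra.
Qed.

Theorem lemma4p2 (t1 t2 : R)
  (h1 : 0 < t1 < PI / 2) (h2 : 0 < t2 < PI / 2)
  (heq : t1 * cot t1 = PI * cot t2) :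
  2 * t1 / sin t1 + 2 * cos t1 - PI > 2 * PI / sin t2 - 2 * PI.
Proof.
  pose proof PI_bounds as Hp.
  assert (HPP : PP PI t1 (sin t1) (cos t1) > 0).
  { destruct (Rle_lt_dec t1 0.79) as [Hl|Hl].
    - apply reg1; lra.
    - replace t1 with (PI/2 - (PI/2 - t1)) by ring. apply reg2; lra. }
  assert (Hs1 : 0 < sin t1) by (apply sin_gt_0; lra).
  assert (Hk1 : 0 < cos t1) by (apply cos_gt_0; lra).
  assert (Hs2 : 0 < sin t2) by (apply sin_gt_0; lra).
  assert (Hk2 : 0 < cos t2) by (apply cos_gt_0; lra).
  assert (H22 : sin t2 * sin t2 + cos t2 * cos t2 = 1).
  { pose proof (sin2_cos2 t2) as H. unfold Rsqr in H. exact H. }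
  unfold cot in heq.
  set (s := sin t1) in *. set (k := cos t1) in *.
  set (S2 := sin t2) in *. set (C2 := cos t2) in *.
  set (c := C2 / S2).
  assert (Hc : c = t1 * (k / s) / PI).
  { unfold c. rewrite heq. field. split; lra. }
  assert (HA : 1 + c^2/2 - 1/S2 >= 0).
  { assert (E : 1 + c^2/2 - 1/S2 = (2*S2^2 + C2^2 - 2*S2)/(2*S2^2)) by (unfold c; field; lra).
    rewrite E. apply Rle_ge. unfold Rdiv. apply Rmult_le_pos. nra.
    apply Rlt_le, Rinv_0_lt_compat. nra. }
  assert (HB : 2 * t1 / s + 2 * k - PI - PI * c^2 = PP PI t1 s k / (PI * s^2)).
  { rewrite Hc. unfold PP. field. split; lra. }
  assert (HC : PP PI t1 s k / (PI * s^2) > 0).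
  { apply Rdiv_lt_0_compat. lra. nra. }
  assert (HD : 2 * PI / S2 - 2 * PI <= PI * c^2).
  { assert (2*PI*(1/S2) <= 2*PI*(1 + c^2/2)) by (apply Rmult_le_compat_l; lra).
    replace (2 * PI / S2) with (2*PI*(1/S2)) by (field; lra). lra. }
  lra.
Qed.
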